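(* Let $\Sigma=(\mathbf{x},\mathbf{F})$ be an LP seed of rank $n\ge2$ satisfying Condition 1.2. Then $$R[x_1,x_2^{\pm1},\dots,x_n^{\pm1}]\cap R[x_1^{\pm1},x_2,x'_2,\dots,x_n,x'_n]=R[x_1,x_2,x'_2,\dots,x_n,x'_n].$$
   Context: $R$ is a unique factorization domain containing $\mathbb{Z}$ and $\mathcal{F}$ is the field of rational functions in $n$ variables over $\mathrm{Frac}(R)$; all rings are subrings of $\mathcal{F}$. An LP seed of rank $n$ is a pair $(\mathbf{x},\mathbf{F})$ where $\mathbf{x}=\{x_1,\dots,x_n\}$ is a transcendence basis of $\mathcal{F}$ over $\mathrm{Frac}(R)$ and $\mathbf{F}=\{F_1,\dots,F_n\}$ are irreducible polynomials in $R[x_1,\dots,x_n]$ with $x_j\nmid F_i$ for all $i,j$ and $F_i$ not involving $x_i$. The exchange Laurent polynomial is $\hat F_j=F_j/\prod_{k\neq j}x_k^{a_k}$, with $a_k\in\mathbb{Z}_{\ge0}$ maximal such that $F_k^{a_k}$ divides $F_j|_{x_k\leftarrow F_k/x'_k}$ in $R[x_1,\dots,x_{k-1},(x'_k)^{-1},x_{k+1},\dots,x_n]$. Set $x'_j=\hat F_j/x_j$. Lexicographic order on $\mathbb{Z}^n$: $\mathbf{a}\prec\mathbf{a}'$ if the first nonzero entry of $\mathbf{a}'-\mathbf{a}$ is positive; the lexicographically first monomial of a polynomial is its term with $\prec$-smallest exponent vector. Condition 1.2: for every $k\in[1,n]$, with $M_k$ the lexicographically first monomial of $F_k$: (i) $\hat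 F_k=F_k$; (ii) $M_k=x_{k+1}^{v_{k+1,k}}\cdots x_n^{v_{n,k}}$ (coefficient $1$) with $v_{\cdot,k}\in\mathbb{Z}_{\ge0}$ for $k\in[1,n-1]$, and $M_n=1$; (iii) if $k\ne1$ and $F_k$ involves $x_1$, then every monomial of $F_k-M_k$ is divisible by $x_1$; (iv) if $k\notin\{1,2\}$, $F_k$ does not involve $x_1$, and there is $i\in[2,k-1]$ such that $x_k$ divides $M_i$, then every monomial of $F_k-M_k$ is divisible by $x_i$. *)

(* Defs.v *)
From HB Require Import structures.
From mathcomp Require Import all_boot all_order all_algebra.
From mathcomp Require Import fraction.
From mathcomp Require Import mpoly.

Set Implicit Arguments.
Unset Strict Implicit.
Unset Printing Implicit Defensive.

Import GRing.Theory.
Local Open Scope ring_scope.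

Definition dvdR (T : comRingType) (a b : T) : Prop := exists c, b = c * a.

Definition assocR (T : comUnitRingType) (a b : T) : Prop :=
  exists2 u, u \is a GRing.unit & a = u * b.

Definition irreducibleR (T : idomainType) (a : T) : Prop :=
  [/\ a != 0, a \isn't a GRing.unit &
      forall b c, a = b * c -> b \is a GRing.unit \/ c \is a GRing.unit].

Definition UFD (T : idomainType) : Prop :=
  (forall a : T, a != 0 -> a \isn't a GRing.unit ->
     exists s : seq T, (forall b, b \in s -> irreducibleR b) /\
                       a = \prod_(b <- s) b)
  /\
  (forall s t : seq T,
     (forall b, b \in s -> irreducibleR b) ->
     (forall b, b \in t -> irreducibleR b) ->
     \prod_(b <- s) b = \prod_(b <- t) b ->
     exists t' : seq T, [/\ perm_eq t t', size s = size t' &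
        forall i, (i < size s)%N -> assocR (nth 0 s i) (nth 0 t' i)]).

Section Poly.
Variables (n : nat) (R : idomainType).

Definition involves (p : {mpoly R[n]}) (i : 'I_n) : Prop :=
  exists2 m, m \in msupp p & (0 < m i)%N.

Definition lexlt (m m' : 'X_{1..n}) : Prop :=
  exists i : 'I_n, (forall j : 'I_n, (j < i)%N -> m j = m' j) /\ (m i < m' i)%N.

Definition lexfirst (p : {mpoly R[n]}) (m : 'X_{1..n}) : Prop :=
  m \in msupp p /\ forall m', m' \in msupp p -> m' != m -> lexlt m m'.

(* F_j |_{x_k <- F_k / x'_k}, written as a polynomial in
   x_1,..,x_{k-1},(x'_k)^{-1},x_{k+1},..,x_n where the k-th variable
   'X_k stands for (x'_k)^{-1} *)
Definition exch_subst (F : 'I_n -> {mpoly R[n]}) (j k : 'I_n) : {mpoly R[n]} :=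
  F j \mPo [tuple (if i == k then F k * 'X_i else 'X_i) | i < n].

Definition exch_exp (F : 'I_n -> {mpoly R[n]}) (j k : 'I_n) (a : nat) : Prop :=
  dvdR (F k ^+ a) (exch_subst F j k) /\ ~ dvdR (F k ^+ a.+1) (exch_subst F j k).

(* \hat F_j = F_j, i.e. all exponents a_k (k <> j) in the denominator
   monomial prod_{k<>j} x_k^{a_k} vanish *)
Definition hatF_eq_F (F : 'I_n -> {mpoly R[n]}) (j : 'I_n) : Prop :=
  forall k : 'I_n, k != j -> exch_exp F j k 0.

(* LP seed (x, F) of rank n, with x the standard variables *)
Definition LPseed (F : 'I_n -> {mpoly R[n]}) : Prop :=
  forall i : 'I_n,
    [/\ irreducibleR (F i),
        forall j : 'I_n, ~ dvdR ('X_j) (F i) &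
        ~ involves (F i) i].

(* Condition 1.2 (0-based indices: paper's x_1 is index 0) *)
Definition Condition12 (F : 'I_n -> {mpoly R[n]}) : Prop :=
  forall k : 'I_n,
    [/\ hatF_eq_F F k,
        (exists2 m, lexfirst (F k) m &
           (F k)@_m = 1 /\ forall i : 'I_n, (i <= k)%N -> m i = 0%N),
        (forall m i0, lexfirst (F k) m -> val i0 = 0%N ->
           (0 < k)%N -> involves (F k) i0 ->
           forall m', m' \in msupp (F k) -> m' != m -> (0 < m' i0)%N) &
        (forall m i0, lexfirst (F k) m -> val i0 = 0%N ->
           (1 < k)%N -> ~ involves (F k) i0 ->
           forall i : 'I_n, (1 <= i)%N -> (i < k)%N ->
           forall mi, lexfirst (F i) mi -> (0 < mi k)%N ->
           forall m', m' \in msupp (F k) -> m' != m -> (0 < m' i)%N)].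

End Poly.

Notation Kfield n R := {fraction {mpoly R%type[n]}}.

Notation "x %:F" := (@FracField.tofrac _ x) (format "x %:F").

Definition Xf (n : nat) (R : idomainType) (i : 'I_n) : Kfield n R :=
  ('X_i : {mpoly R[n]})%:F.

(* x'_j = \hat F_j / x_j ; under Condition 1.2 (i), \hat F_j = F_j *)
Definition xprime (n : nat) (R : idomainType) (F : 'I_n -> {mpoly R[n]})
  (j : 'I_n) : Kfield n R := (F j)%:F / Xf R j.

(* R[s_1, ..., s_m] inside the field: values of polynomials with
   coefficients in R at the generators *)
Definition Rgen (n : nat) (R : idomainType) (s : seq (Kfield n R))
  (f : Kfield n R) : Prop :=
  exists p : {mpoly R[size s]},
    f = mmap (fun c : R => (c%:MP : {mpoly R[n]})%:F)
             (fun i : 'I_(size s) => nth 0 s i) p.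

Definition gensA (n : nat) (R : idomainType) : seq (Kfield n R) :=
  [seq Xf R i | i <- enum 'I_n] ++
  [seq (Xf R i)^-1 | i <- enum 'I_n & (0 < val i)%N].

Definition gensB (n : nat) (R : idomainType) (F : 'I_n -> {mpoly R[n]})
  : seq (Kfield n R) :=
  [seq Xf R i | i <- enum 'I_n] ++
  [seq (Xf R i)^-1 | i <- enum 'I_n & val i == 0%N] ++
  [seq xprime F i | i <- enum 'I_n & (0 < val i)%N].

Definition gensC (n : nat) (R : idomainType) (F : 'I_n -> {mpoly R[n]})
  : seq (Kfield n R) :=
  [seq Xf R i | i <- enum 'I_n] ++
  [seq xprime F i | i <- enum 'I_n & (0 < val i)%N].

(* Main.v *)
Require Import Defs.
From HB Require Import structures.
From mathcomp Require Import all_boot all_order all_algebra.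
From mathcomp Require Import fraction.
From mathcomp Require Import mpoly.
From mathcomp Require Import zify ring.
From Stdlib Require Import IndefiniteDescription.
Local Open Scope ring_scope.

Module Aux.
Set Implicit Arguments. Unset Strict Implicit. Unset Printing Implicit Defensive.
Import GRing.Theory.

Section Gen.
Variables (n : nat) (R : idomainType).
Local Notation K := (Kfield n R).
Definition phiM : {rmorphism R -> K} := (@FracField.tofrac _) \o (@mpolyC n R).
Lemma phiE c : phiM c = (c%:MP : {mpoly R[n]})%:F. Proof. by []. Qed.

Lemma RgenE (s : seq K) f : Rgen s f <->
  exists p : {mpoly R[size s]}, f = mmap phiM (fun i => nth 0 s i) p.
Proof. by []. Qed.

Lemma Rgen_const (s : seq K) c : Rgen s (phiM c).
Proof. by apply/RgenE; exists c%:MP; rewrite mmapC. Qed.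

Lemma Rgen_mem (s : seq K) x : x \in s -> Rgen s x.
Proof.
move=> xs; apply/RgenE; have hi : (index x s < size s)%N by rewrite index_mem.
exists 'X_(Ordinal hi); rewrite mmapX mmap1U /= nth_index //.
Qed.

Lemma Rgen_add (s : seq K) x y : Rgen s x -> Rgen s y -> Rgen s (x + y).
Proof.
move=> /RgenE[p ->] /RgenE[q ->]; apply/RgenE; exists (p + q).
by rewrite rmorphD.
Qed.

Lemma Rgen_mul (s : seq K) x y : Rgen s x -> Rgen s y -> Rgen s (x * y).
Proof.
move=> /RgenE[p ->] /RgenE[q ->]; apply/RgenE; exists (p * q).
by rewrite rmorphM.
Qed.

Lemma Rgen_ind (s : seq K) (S : K -> Prop) :
  (forall c, S (phiM c)) ->
  (forall x y, S x -> S y -> S (x + y)) ->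
  (forall x y, S x -> S y -> S (x * y)) ->
  (forall x, x \in s -> S x) ->
  forall f, Rgen s f -> S f.
Proof.
move=> Sc Sa Sm Sg f /RgenE[p ->]; rewrite /mmap.
have S0 : S 0 by have := Sc 0; rewrite rmorph0.
have S1 : S 1 by have := Sc 1; rewrite rmorph1.
apply: (big_ind S S0 Sa) => m _; apply: (Sm) => //.
rewrite /mmap1; apply: (big_ind S S1 Sm) => i _.
elim: (m i) => [|k IH]; first by rewrite expr0.
by rewrite exprS; apply: (Sm) => //; apply: (Sg); apply: mem_nth.
Qed.

Lemma Rgen_sub (s t : seq K) :
  (forall x, x \in s -> Rgen t x) -> forall f, Rgen s f -> Rgen t f.
Proof.
move=> H; apply: Rgen_ind => //; [exact: Rgen_const|exact: Rgen_add|exact: Rgen_mul].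
Qed.
End Gen.


Section Mem.
Variables (n : nat) (R : idomainType) (F : 'I_n -> {mpoly R[n]}).
Local Notation K := (Kfield n R).

Lemma memC x : x \in gensC F ->
  (exists i, x = Xf R i) \/ (exists i, (0 < val i)%N /\ x = xprime F i).
Proof.
rewrite mem_cat => /orP[/mapP[i _ ->]|/mapP[i]]; first by left; exists i.
by rewrite mem_filter => /andP[h _] ->; right; exists i.
Qed.
Lemma inC_X i : Xf R i \in gensC F.
Proof. by rewrite mem_cat; apply/orP; left; apply/mapP; exists i; rewrite ?mem_enum. Qed.
Lemma inC_xp i : (0 < val i)%N -> xprime F i \in gensC F.
Proof.
move=> h; rewrite mem_cat; apply/orP; right; apply/mapP; exists i => //.
by rewrite mem_filter h mem_enum.
Qed.

Lemma memA x : x \in gensA n R ->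
  (exists i, x = Xf R i) \/ (exists i, (0 < val i)%N /\ x = (Xf R i)^-1).
Proof.
rewrite mem_cat => /orP[/mapP[i _ ->]|/mapP[i]]; first by left; exists i.
by rewrite mem_filter => /andP[h _] ->; right; exists i.
Qed.
Lemma inA_X i : Xf R i \in gensA n R.
Proof. by rewrite mem_cat; apply/orP; left; apply/mapP; exists i; rewrite ?mem_enum. Qed.
Lemma inA_Xinv i : (0 < val i)%N -> (Xf R i)^-1 \in gensA n R.
Proof.
move=> h; rewrite mem_cat; apply/orP; right; apply/mapP; exists i => //.
by rewrite mem_filter h mem_enum.
Qed.

Lemma memB x : x \in gensB F ->
  [\/ (exists i, x = Xf R i), (exists i, (val i = 0)%N /\ x = (Xf R i)^-1) |
      (exists i, (0 < val i)%N /\ x = xprime F i)].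
Proof.
rewrite mem_cat => /orP[/mapP[i _ ->]|]; first by apply: Or31; exists i.
rewrite mem_cat => /orP[/mapP[i]|/mapP[i]].
  by rewrite mem_filter => /andP[/eqP h _] ->; apply: Or32; exists i.
by rewrite mem_filter => /andP[h _] ->; apply: Or33; exists i.
Qed.
Lemma inB_X i : Xf R i \in gensB F.
Proof. by rewrite mem_cat; apply/orP; left; apply/mapP; exists i; rewrite ?mem_enum. Qed.
Lemma inB_Xinv i : (val i = 0)%N -> (Xf R i)^-1 \in gensB F.
Proof.
move=> h; rewrite mem_cat; apply/orP; right; rewrite mem_cat; apply/orP; left.
by apply/mapP; exists i => //; rewrite mem_filter h eqxx mem_enum.
Qed.
Lemma inB_xp i : (0 < val i)%N -> xprime F i \in gensB F.
Proof.
move=> h; rewrite mem_cat; apply/orP; right; rewrite mem_cat; apply/orP; right.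
by apply/mapP; exists i => //; rewrite mem_filter h mem_enum.
Qed.

Definition rclosed (S : K -> Prop) :=
  [/\ forall c, S (phiM n R c), forall x y, S x -> S y -> S (x + y) &
      forall x y, S x -> S y -> S (x * y)].

Lemma rclosed_Rgen s : rclosed (Rgen s).
Proof. split; [exact: Rgen_const|exact: Rgen_add|exact: Rgen_mul]. Qed.

Lemma rc_sum S (I : Type) (r : seq I) (G : I -> K) : rclosed S ->
  (forall i, S (G i)) -> S (\sum_(i <- r) G i).
Proof.
case=> Sc Sa Sm H; have S0 : S 0 by have := Sc 0; rewrite rmorph0.
exact: (big_ind S S0 Sa).
Qed.

Lemma rc_prod S (I : Type) (r : seq I) (G : I -> K) : rclosed S ->
  (forall i, S (G i)) -> S (\prod_(i <- r) G i).
Proof.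
case=> Sc Sa Sm H; have S1 : S 1 by have := Sc 1; rewrite rmorph1.
exact: (big_ind S S1 Sm).
Qed.

Lemma rc_exp S x k : rclosed S -> S x -> S (x ^+ k).
Proof.
case=> Sc Sa Sm H; elim: k => [|k IH]; last by rewrite exprS; apply: Sm.
by have := Sc 1; rewrite rmorph1 expr0.
Qed.

Lemma rc_opp S x : rclosed S -> S x -> S (- x).
Proof.
move=> hS Sx; case: (hS) => Sc _ Sm; rewrite -mulN1r.
by have := Sc (-1); rewrite rmorphN rmorph1 => h; apply: Sm.
Qed.

Lemma tofrac_polyE (p : {mpoly R[n]}) :
  p%:F = \sum_(m <- msupp p) phiM n R p@_m * \prod_(i < n) Xf R i ^+ m i.
Proof.
rewrite {1}(mpolyE p) rmorph_sum; apply: eq_bigr => m _.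
rewrite -mul_mpolyC rmorphM /= mpolyXE_id rmorph_prod; congr (_ * _).
by apply: eq_bigr => i _; rewrite rmorphXn.
Qed.

Lemma rc_poly S (p : {mpoly R[n]}) : rclosed S -> (forall i, S (Xf R i)) -> S (p%:F).
Proof.
move=> hS HX; rewrite tofrac_polyE; apply: rc_sum => // m.
case: (hS) => Sc _ Sm; apply: Sm => //; apply: rc_prod => // i.
exact: rc_exp.
Qed.
End Mem.


Section Lex.
Variables (n : nat) (R : idomainType).
Implicit Types (m k u v : 'X_{1..n}).

Lemma lexlt_irr m : ~ lexlt m m.
Proof. by case=> i [_]; rewrite ltnn. Qed.

Lemma lexlt_trans m1 m2 m3 : lexlt m1 m2 -> lexlt m2 m3 -> lexlt m1 m3.
Proof.
case=> i [Hi1 Hi2] [j [Hj1 Hj2]].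
case: (ltngtP (val i) (val j)) => [ij|ji|/val_inj ij].
- exists i; split; last by rewrite -(Hj1 i ij).
  by move=> l li; rewrite Hi1 // Hj1 //; apply: ltn_trans ij.
- exists j; split; last by rewrite (Hi1 j ji).
  by move=> l lj; rewrite Hi1 ?Hj1 //; apply: ltn_trans ji.
- subst j; exists i; split; last exact: ltn_trans Hj2.
  by move=> l li; rewrite Hi1 ?Hj1.
Qed.

Lemma lexlt_total m1 m2 : m1 != m2 -> lexlt m1 m2 \/ lexlt m2 m1.
Proof.
move=> ne.
have [i0 Hi0] : exists i, m1 i != m2 i.
  apply/existsP; apply: contraR ne => /existsPn H; apply/eqP/mnmP => i.
  by have := H i; rewrite negbK => /eqP.
case: (@arg_minnP _ i0 (fun i : 'I_n => m1 i != m2 i) (fun i : 'I_n => val i) Hi0) => i Hi Hmin.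
have Hlt : forall j : 'I_n, (j < i)%N -> m1 j = m2 j.
  move=> j ji; apply/eqP; apply: contraTT ji => hj.
  by rewrite -leqNgt; apply: Hmin.
case: (ltngtP (m1 i) (m2 i)) => [h|h|h]; first by left; exists i.
  by right; exists i; split => // j /Hlt.
by rewrite h eqxx in Hi.
Qed.

Lemma lexlt_neq m1 m2 : lexlt m1 m2 -> m1 != m2.
Proof. by move=> h; apply/eqP => e; subst; exact: lexlt_irr h. Qed.

Lemma lexlt_addr m1 m2 k : lexlt m1 m2 -> lexlt (m1 + k)%MM (m2 + k)%MM.
Proof.
case=> i [H1 H2]; exists i; split; last by rewrite !mnmDE ltn_add2r.
by move=> j ji; rewrite !mnmDE H1.
Qed.

Definition lexle m1 m2 := m1 = m2 \/ lexlt m1 m2.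

Lemma lexle_add m u k v : lexle m u -> lexle k v ->
  lexle (m + k)%MM (u + v)%MM /\ ((m, k) != (u, v) -> lexlt (m + k)%MM (u + v)%MM).
Proof.
move=> [<-|h1] [<-|h2]; rewrite /lexle.
- by split; [left|rewrite eqxx].
- have h : lexlt (m + k)%MM (m + v)%MM.
    by rewrite ![(m + _)%MM]addmC; exact: lexlt_addr.
  by split => //; right.
- have h : lexlt (m + k)%MM (u + k)%MM by exact: lexlt_addr.
  by split => //; right.
- have h : lexlt (m + k)%MM (u + v)%MM.
    apply: (@lexlt_trans _ (u + k)%MM); first exact: lexlt_addr.
    rewrite ![(u + _)%MM]addmC; exact: lexlt_addr.
  by split => //; right.
Qed.

Definition LF (p : {mpoly R[n]}) m :=
  p@_m = 1 /\ forall m', m' \in msupp p -> lexle m m'.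

Lemma LF_X e : LF 'X_[e] e.
Proof.
split; first by rewrite mcoeffX eqxx.
by move=> m'; rewrite msuppX mem_seq1 => /eqP ->; left.
Qed.

Lemma LF_1 : LF 1 0%MM.
Proof. by rewrite -mpolyX0; exact: LF_X. Qed.

Lemma LF_mul p q m k : LF p m -> LF q k -> LF (p * q) (m + k)%MM.
Proof.
move=> [Hp1 Hp2] [Hq1 Hq2]; split.
  have mp : m \in msupp p by rewrite mcoeff_msupp Hp1 oner_eq0.
  have mq : k \in msupp q by rewrite mcoeff_msupp Hq1 oner_eq0.
  rewrite mpolyME raddf_sum /=.
  have mem : (m, k) \in [seq (x1, x2) | x1 <- msupp p, x2 <- msupp q].
    by apply/allpairsP; exists (m, k).
  have uq : uniq [seq (x1, x2) | x1 <- msupp p, x2 <- msupp q].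
    by apply: allpairs_uniq; [exact: msupp_uniq|exact: msupp_uniq|
      move=> [a b] [c d]].
  rewrite (bigD1_seq _ mem uq) /= mcoeffZ mcoeffX eqxx Hp1 Hq1 !mulr1.
  rewrite big_seq_cond big1 ?addr0 // => -[u v] /andP[/allpairsP[[u' v'] [hu hv e]] ne].
  case: e => ??; subst u' v'.
  rewrite mcoeffZ mcoeffX /=.
  have ne' : (m, k) != (u, v) by rewrite eq_sym.
  have [_ /(_ ne') h] := lexle_add (Hp2 _ hu) (Hq2 _ hv).
  by rewrite eq_sym (negbTE (lexlt_neq h)) mulr0.
move=> m' /msuppM_le /allpairsP [[u v] [hu hv ->]] /=.
by case: (lexle_add (Hp2 _ hu) (Hq2 _ hv)).
Qed.

Lemma LF_exp p m (e : nat) : LF p m -> LF (p ^+ e) (m *+ e)%MM.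
Proof.
move=> h; elim: e => [|e IH]; first by rewrite expr0 mulm0n; exact: LF_1.
by rewrite exprS mulmS; exact: LF_mul.
Qed.

Lemma LF_prod (I : Type) (r : seq I) (G : I -> {mpoly R[n]}) (M : I -> 'X_{1..n}) :
  (forall i, LF (G i) (M i)) ->
  LF (\prod_(i <- r) G i) (\sum_(i <- r) M i)%MM.
Proof.
move=> H; elim: r => [|i r IH]; first by rewrite !big_nil; exact: LF_1.
by rewrite !big_cons; exact: LF_mul.
Qed.

Lemma LF_scale_coef p m c : LF p m -> (c *: p)@_m = c.
Proof. by case=> h _; rewrite mcoeffZ h mulr1. Qed.
End Lex.



Section Min.
Variables (n : nat) (A : eqType) (E : A -> 'X_{1..n}).
Lemma exists_lexmin (s : seq A) : s != [::] ->
  exists2 x, x \in s & forall y, y \in s -> lexle (E x) (E y).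
Proof.
elim: s => [|a s IH] // _.
case: (eqVneq s [::]) => [->|ne].
  by exists a; rewrite ?mem_seq1 // => y; rewrite mem_seq1 => /eqP ->; left.
have [x xs Hx] := IH ne.
case: (eqVneq (E a) (E x)) => [e|ne'].
  exists a; first exact: mem_head.
  move=> y; rewrite in_cons => /orP[/eqP ->|ys]; first by left.
  by rewrite e; apply: Hx.
case: (lexlt_total ne') => h.
  exists a; first exact: mem_head.
  move=> y; rewrite in_cons => /orP[/eqP ->|ys]; first by left.
  case: (Hx y ys) => [<-|h']; right => //; exact: lexlt_trans h h'.
exists x; first by rewrite in_cons xs orbT.
move=> y; rewrite in_cons => /orP[/eqP ->|ys]; first by right.
exact: Hx.
Qed.
End Min.

Section Core.
Variables (n : nat) (R : idomainType) (F : 'I_n -> {mpoly R[n]}).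
Variables (i0 : 'I_n) (M : 'I_n -> 'X_{1..n}) (beta : 'X_{1..n}).
Hypothesis Hi0 : val i0 = 0%N.
Hypothesis HM1 : forall i, LF (F i) (M i).
Hypothesis HM2 : forall i j : 'I_n, (j <= i)%N -> M i j = 0%N.
Hypothesis Hbeta : beta i0 = 0%N.

Definition Tp (a b : 'X_{1..n}) : {mpoly R[n]} :=
  'X_[(a + beta - b)%MM] * \prod_(i < n) F i ^+ b i.
Definition Ee (a b : 'X_{1..n}) : 'X_{1..n} :=
  ((a + beta - b) + \sum_(i < n) (M i *+ b i))%MM.

Lemma LF_T a b : LF (Tp a b) (Ee a b).
Proof.
apply: LF_mul; first exact: LF_X.
apply: LF_prod => i; exact: LF_exp.
Qed.

Definition good (x : R * ('X_{1..n} * 'X_{1..n})) :=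
  [/\ forall i, (x.2.1 i == 0%N) || (x.2.2 i == 0%N), x.2.1 i0 = 0%N, x.2.2 i0 = 0%N &
      forall i, (x.2.2 i <= beta i)%N].

Lemma Ee_i0 x : good x -> Ee x.2.1 x.2.2 i0 = 0%N.
Proof.
case=> _ ha hb _; rewrite /Ee mnmDE mnmBE mnmDE ha hb Hbeta /= mnm_sumE.
by rewrite big1 // => i _; rewrite mulmnE HM2 // Hi0.
Qed.

Lemma Ee_inj' (a b a' b' : 'X_{1..n}) :
  (forall i, (a i == 0%N) || (b i == 0%N)) -> (forall i, (b i <= beta i)%N) ->
  (forall i, (a' i == 0%N) || (b' i == 0%N)) -> (forall i, (b' i <= beta i)%N) ->
  Ee a b = Ee a' b' -> a = a' /\ b = b'.
Proof.
move=> s1 s4 s1' s4' e.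
suff H : forall k (j : 'I_n), (j < k)%N -> a j = a' j /\ b j = b' j.
  have H' := fun j => H n.+1 j (leq_trans (ltn_ord j) (leqnSn n)).
  by split; apply/mnmP => j; case: (H' j).
elim=> [//|k IH] j jk.
have ej := congr1 (fun m : 'X_{1..n} => m j) e; move: ej => /=.
rewrite /Ee !mnmDE !mnmBE !mnmDE !mnm_sumE.
have -> : (\sum_(i < n) (M i *+ b i)%MM j = \sum_(i < n) (M i *+ b' i)%MM j)%N.
  apply: eq_bigr => i _; rewrite !mulmnE.
  case: (leqP (val j) (val i)) => ji; first by rewrite HM2.
  by case: (IH i (leq_trans ji (ltnSE jk))) => _ ->.
move=> /eqP; rewrite eqn_add2r => /eqP ej.
move: (s1 j) (s1' j) (s4 j) (s4' j) => h1 h2 h3 h4.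
move: (a j) (b j) (a' j) (b' j) (beta j) h1 h2 h3 h4 ej => x1 x2 x3 x4 x5.
move=> /orP[] /eqP h1 /orP[] /eqP h2; subst; lia.
Qed.

Lemma Ee_inj x y : good x -> good y -> Ee x.2.1 x.2.2 = Ee y.2.1 y.2.2 ->
  x.2 = y.2.
Proof.
case: x => r [a b]; case: y => r' [a' b'] [s1 _ _ s4] [s1' _ _ s4'] e.
case: (Ee_inj' s1 s4 s1' s4' e) => e1 e2.
change (a = a') in e1; change (b = b') in e2; change ((a, b) = (a', b')).
by rewrite e1 e2.
Qed.

Definition Qs (s : seq (R * ('X_{1..n} * 'X_{1..n}))) : {mpoly R[n]} :=
  \sum_(x <- s) x.1 *: Tp x.2.1 x.2.2.

Lemma lex_kill (s : seq (R * ('X_{1..n} * 'X_{1..n}))) :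
  (forall x, x \in s -> good x) ->
  (forall m : 'X_{1..n}, m i0 = 0%N -> (Qs s)@_m = 0) -> Qs s = 0.
Proof.
move: {2}(size s) (leqnn (size s)) => N; elim: N s => [|N IH] s.
  by rewrite leqn0 => /nilP -> _ _; rewrite /Qs big_nil.
move=> hs Hg Hv.
case: (eqVneq s [::]) => [->|ne]; first by rewrite /Qs big_nil.
have [x xs Hx] := exists_lexmin (fun y : R * ('X_{1..n} * 'X_{1..n}) => Ee y.2.1 y.2.2) ne.
set Es := Ee x.2.1 x.2.2.
pose P := fun y : R * ('X_{1..n} * 'X_{1..n}) => Ee y.2.1 y.2.2 == Es.
have Hsplit : Qs s = (\sum_(y <- s | P y) y.1) *: Tp x.2.1 x.2.2 +
                     Qs [seq y <- s | ~~ P y].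
  rewrite /Qs (bigID P) big_filter scaler_suml; congr (_ + _).
  rewrite big_seq_cond [RHS]big_seq_cond; apply: eq_bigr => y /andP[ys Py].
  have e := Ee_inj (Hg y ys) (Hg x xs) (eqP Py).
  move: e; case: y ys Py => r [a b] ys Py e.
  change ((a, b) = x.2) in e; change (r *: Tp a b = r *: Tp x.2.1 x.2.2).
  by rewrite -e.
have Hc : \sum_(y <- s | P y) y.1 = 0.
  rewrite -[RHS](Hv Es (Ee_i0 (Hg x xs))).
  rewrite /Qs raddf_sum /= big_mkcond [LHS]big_seq [RHS]big_seq.
  apply: eq_bigr => y ys; rewrite mcoeffZ.
  case: ifP => [/eqP Py|nPy].
    by case: (LF_T y.2.1 y.2.2) => h _; rewrite -Py h mulr1.
  case: (eqVneq ((Tp y.2.1 y.2.2)@_Es) 0) => [->|nz]; first by rewrite mulr0.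
  exfalso; have : Es \in msupp (Tp y.2.1 y.2.2) by rewrite mcoeff_msupp.
  case: (LF_T y.2.1 y.2.2) => _ /[apply] h1.
  have nP : Ee y.2.1 y.2.2 != Es by rewrite /P in nPy; rewrite nPy.
  case: h1 => [e|h1]; first by rewrite e eqxx in nP.
  case: (Hx y ys) => [e|h2]; first by rewrite -e /Es eqxx in nP.
  exact: lexlt_irr (lexlt_trans h1 h2).
have HQ : Qs s = Qs [seq y <- s | ~~ P y] by rewrite Hsplit Hc scale0r add0r.
rewrite HQ; apply: IH.
- rewrite size_filter; have h1 := count_predC P s.
  have h2 : (0 < count P s)%N.
    by rewrite -has_count; apply/hasP; exists x => //; rewrite /P eqxx.
  change (count (predC P) s <= N)%N; lia.
- by move=> y; rewrite mem_filter => /andP[_]; apply: Hg.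
- by move=> m hm; rewrite -HQ; apply: Hv.
Qed.
End Core.


Lemma expr_div_id (K : fieldType) (x y : K) a b c : x != 0 -> (b <= c)%N ->
  x ^+ a * (y / x) ^+ b * x ^+ c = x ^+ (a + c - b) * y ^+ b.
Proof.
move=> x0 bc; have -> : x ^+ c = x ^+ (c - b) * x ^+ b by rewrite -exprD subnK.
rewrite -addnBA // exprD expr_div_n.
field. by rewrite expf_neq0.
Qed.

Lemma aux4 (K : fieldType) (a b c d : K) : a != 0 -> d / a * c * b * a = c * (d * b).
Proof. by move=> h; field. Qed.

Section Main.
Variables (n : nat) (R : idomainType) (F : 'I_n -> {mpoly R[n]}) (i0 : 'I_n).
Hypothesis Hi0 : val i0 = 0%N.
Local Notation K := (Kfield n R).
Local Notation X := (@Xf n R).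
Local Notation xp := (xprime F).
Local Notation phi := (phiM n R).

Lemma mX_neq0 (m : 'X_{1..n}) : ('X_[m] : {mpoly R[n]}) != 0.
Proof.
apply/eqP => h; have h1 : ('X_[m] : {mpoly R[n]})@_m = 1 by rewrite mcoeffX eqxx.
by move: h1; rewrite h mcoeff0 => /eqP; rewrite eq_sym oner_eq0.
Qed.

Definition Xm (m : 'X_{1..n}) : K := ('X_[m] : {mpoly R[n]})%:F.

Lemma Xm_neq0 m : Xm m != 0.
Proof. by rewrite /Xm tofrac_eq0 mX_neq0. Qed.

Lemma Xf_neq0 i : X i != 0.
Proof. exact: (Xm_neq0 U_(i)). Qed.

Lemma XmE m : Xm m = \prod_(i < n) X i ^+ m i.
Proof.
rewrite /Xm mpolyXE_id rmorph_prod; apply: eq_bigr => i _; exact: rmorphXn.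
Qed.

Lemma X_xp i : X i * xp i = (F i)%:F.
Proof. by rewrite /xprime mulrC divfK // Xf_neq0. Qed.

Local Notation RC := (Rgen (gensC F)).

Lemma RC_rc : rclosed RC. Proof. exact: rclosed_Rgen. Qed.
Lemma RC_X i : RC (X i). Proof. exact/Rgen_mem/inC_X. Qed.
Lemma RC_xp i : (0 < val i)%N -> RC (xp i).
Proof. by move=> h; apply/Rgen_mem/inC_xp. Qed.

Definition t (a b : 'X_{1..n}) : K := \prod_(i < n) (X i ^+ a i * xp i ^+ b i).

Lemma t_add a b a' b' : t (a + a')%MM (b + b')%MM = t a b * t a' b'.
Proof.
rewrite /t -big_split; apply: eq_bigr => i _; rewrite !mnmDE !exprD.
by rewrite mulrACA.
Qed.

Lemma t_m0 m : t m 0%MM = Xm m.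
Proof. by rewrite XmE; apply: eq_bigr => i _; rewrite mnm0E expr0 mulr1. Qed.

Lemma t_0U i : t 0%MM U_(i)%MM = xp i.
Proof.
rewrite /t (bigD1 i) //= big1 ?mulr1 => [|j ji].
  by rewrite mnm0E mnm1E eqxx expr0 mul1r expr1.
by rewrite mnm0E mnm1E eq_sym (negbTE ji) !expr0 mulr1.
Qed.

Lemma t_U0 i : t U_(i)%MM 0%MM = X i.
Proof.
rewrite /t (bigD1 i) //= big1 ?mulr1 => [|j ji].
  by rewrite mnm0E mnm1E eqxx expr0 mulr1 expr1.
by rewrite mnm0E mnm1E eq_sym (negbTE ji) !expr0 mulr1.
Qed.

Lemma t_00 : t 0%MM 0%MM = 1.
Proof. by rewrite t_m0 /Xm mpolyX0 rmorph1. Qed.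

Lemma ne_i0 (j : 'I_n) : j != i0 -> (0 < val j)%N.
Proof. by move=> h; rewrite lt0n; apply: contra h => /eqP e; apply/eqP/val_inj; rewrite /= e Hi0. Qed.

Lemma RC_t (a b : 'X_{1..n}) : b i0 = 0%N -> RC (t a b).
Proof.
move=> hb; apply: rc_prod; first exact: RC_rc.
move=> j; case: (RC_rc) => Sc _ Sm; apply: Sm; first by apply: rc_exp; [exact: RC_rc|exact: RC_X].
case: (eqVneq j i0) => [->|ne]; first by rewrite hb expr0; have := Sc 1; rewrite rmorph1.
by apply: rc_exp; [exact: RC_rc|apply: RC_xp; apply: ne_i0].
Qed.

Definition Span (P : 'X_{1..n} * 'X_{1..n} -> Prop) (g : K) :=
  exists s : seq (R * ('X_{1..n} * 'X_{1..n})),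
    (forall x, x \in s -> P x.2) /\ g = \sum_(x <- s) phi x.1 * t x.2.1 x.2.2.

Lemma Span_0 P : Span P 0.
Proof. by exists [::]; rewrite big_nil. Qed.

Lemma Span_add P g h : Span P g -> Span P h -> Span P (g + h).
Proof.
move=> [s [Hs ->]] [s' [Hs' ->]]; exists (s ++ s'); split; last by rewrite big_cat.
by move=> x; rewrite mem_cat => /orP[/Hs|/Hs'].
Qed.

Lemma Span_scale P c g : Span P g -> Span P (phi c * g).
Proof.
move=> [s [Hs ->]]; exists [seq (c * x.1, x.2) | x <- s]; split.
  by move=> x /mapP[y ys ->]; exact: (Hs y ys).
rewrite big_map mulr_sumr; apply: eq_bigr => x _; by rewrite rmorphM mulrA.
Qed.

Lemma Span_t P a b : P (a, b) -> Span P (t a b).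
Proof.
move=> h; exists [:: (1, (a, b))]; split; first by move=> x; rewrite mem_seq1 => /eqP ->.
by rewrite big_seq1 rmorph1 mul1r.
Qed.

Lemma Span_sum P (I : Type) (r : seq I) (G : I -> K) :
  (forall i, Span P (G i)) -> Span P (\sum_(i <- r) G i).
Proof.
move=> H; elim: r => [|i r IH]; first by rewrite big_nil; exact: Span_0.
by rewrite big_cons; apply: Span_add.
Qed.

Lemma Span_mul P g h :
  (forall a b a' b', P (a, b) -> P (a', b') -> P ((a + a')%MM, (b + b')%MM)) ->
  Span P g -> Span P h -> Span P (g * h).
Proof.
move=> HP [s [Hs ->]] [s' [Hs' ->]].
exists [seq (x.1 * y.1, ((x.2.1 + y.2.1)%MM, (x.2.2 + y.2.2)%MM)) | x <- s, y <- s'].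
split.
  move=> z /allpairsP[[x y] [xs ys ->]] /=.
  move: xs ys; case: x => r [a b]; case: y => r' [a' b'] /Hs h1 /Hs' h2.
  exact: HP h1 h2.
rewrite big_allpairs_dep mulr_suml; apply: eq_bigr => x _.
rewrite mulr_sumr; apply: eq_bigr => y _ /=.
by rewrite t_add rmorphM; ring.
Qed.

Definition valid (ab : 'X_{1..n} * 'X_{1..n}) := ab.2 i0 = 0%N.
Definition stdp (ab : 'X_{1..n} * 'X_{1..n}) :=
  valid ab /\ forall i, (ab.1 i == 0%N) || (ab.2 i == 0%N).

Lemma RC_Span g : RC g -> Span valid g.
Proof.
apply: Rgen_ind.
- move=> c; have -> : phi c = phi c * t 0%MM 0%MM by rewrite t_00 mulr1.
  by apply: Span_scale; apply: Span_t; rewrite /valid /= mnm0E.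
- exact: Span_add.
- move=> x y; apply: Span_mul => a b a' b'; rewrite /valid /= mnmDE => -> ->.
  by [].
- move=> x /memC [[i ->]|[i [hi ->]]].
    by rewrite -t_U0; apply: Span_t; rewrite /valid /= mnm0E.
  rewrite -t_0U; apply: Span_t; rewrite /valid /= mnm1E.
  by apply/eqP; rewrite eqb0; apply: contraL hi => /eqP ->; rewrite Hi0.
Qed.

Lemma tofracX m : ('X_[m] : {mpoly R[n]})%:F = \prod_(i < n) X i ^+ m i.
Proof. exact: XmE. Qed.

Lemma t_UU i : t U_(i)%MM U_(i)%MM = (F i)%:F.
Proof.
have -> : t U_(i)%MM U_(i)%MM = t (U_(i) + 0)%MM (0 + U_(i))%MM by rewrite addm0 add0m.
by rewrite t_add t_U0 t_0U X_xp.
Qed.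

Lemma Fi_t i : (F i)%:F = \sum_(m <- msupp (F i)) phi (F i)@_m * t m 0%MM.
Proof. by rewrite tofrac_polyE; apply: eq_bigr => m _; rewrite t_m0 XmE. Qed.

Lemma t_std a b : valid (a, b) -> Span stdp (t a b).
Proof.
have main : forall N a b, (mdeg b <= N)%N -> valid (a, b) -> Span stdp (t a b).
  elim=> [|N IH] a' b' hd hv;
    (case: (boolP [exists i, (0 < a' i)%N && (0 < b' i)%N]) =>
      [/existsP[i /andP[ha hb]]|hno]; last first).
  - apply: Span_t; split => // j; move/existsPn/(_ j): hno.
    by rewrite negb_and -!leqNgt !leqn0.
  - have : (b' i <= mdeg b')%N by rewrite mdegE (bigD1 i) //= leq_addr.
    lia.
  - apply: Span_t; split => // j; move/existsPn/(_ j): hno.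
    by rewrite negb_and -!leqNgt !leqn0.
  have la : (U_(i) <= a')%MM.
    by apply/mnm_lepP => j; rewrite mnm1E; case: eqP => [<-|] //=.
  have lb : (U_(i) <= b')%MM.
    by apply/mnm_lepP => j; rewrite mnm1E; case: eqP => [<-|] //=.
  have ea := submK la; have eb := submK lb.
  set a1 := (a' - U_(i))%MM in ea *; set b1 := (b' - U_(i))%MM in eb *.
  have -> : t a' b' = t a1 b1 * (F i)%:F by rewrite -ea -eb t_add t_UU.
  rewrite Fi_t mulr_sumr; apply: Span_sum => m.
  rewrite mulrCA; have -> : t a1 b1 * t m 0%MM = t (a1 + m)%MM b1 by rewrite -t_add addm0.
  apply: Span_scale; apply: IH.
  - by move: hd; rewrite -eb mdegD mdeg1 addn1 ltnS.
  - move: hv; rewrite /valid /= -eb mnmDE => /eqP; rewrite addn_eq0 => /andP[/eqP ->].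
    by [].
move=> hv; exact: main (leqnn _) hv.
Qed.

Lemma Span_sum_seq P (I : eqType) (r : seq I) (G : I -> K) :
  (forall i, i \in r -> Span P (G i)) -> Span P (\sum_(i <- r) G i).
Proof.
elim: r => [|i r IH] H; first by rewrite big_nil; exact: Span_0.
rewrite big_cons; apply: Span_add; first by apply: H; rewrite mem_head.
by apply: IH => j jr; apply: H; rewrite in_cons jr orbT.
Qed.

Lemma Span_std g : Span valid g -> Span stdp g.
Proof.
move=> [s [Hs ->]]; apply: Span_sum_seq => x xs; apply: Span_scale; apply: t_std.
exact: Hs.
Qed.

Definition Apred (f : K) := exists (h : {mpoly R[n]}) (g : 'X_{1..n}),
  g i0 = 0%N /\ f = h%:F / Xm g.

Lemma Xm0 : Xm 0%MM = 1. Proof. by rewrite /Xm mpolyX0 rmorph1. Qed.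

Lemma Apred_rc : rclosed Apred.
Proof.
split.
- move=> c; exists c%:MP, 0%MM; split; first by rewrite mnm0E.
  rewrite Xm0 divr1; reflexivity.
- move=> x y [h1 [g1 [e1 ->]]] [h2 [g2 [e2 ->]]].
  exists (h1 * 'X_[g2] + h2 * 'X_[g1]), (g1 + g2)%MM; split.
    by rewrite mnmDE e1 e2.
  rewrite /Xm mpolyXD !rmorphD !rmorphM addf_div; first reflexivity.
  exact: Xm_neq0. exact: Xm_neq0.
- move=> x y [h1 [g1 [e1 ->]]] [h2 [g2 [e2 ->]]].
  exists (h1 * h2), (g1 + g2)%MM; split; first by rewrite mnmDE e1 e2.
  rewrite /Xm mpolyXD !rmorphM mulf_div; reflexivity.
Qed.

Lemma Apred_poly (p : {mpoly R[n]}) : Apred p%:F.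
Proof. exists p, 0%MM; split; first by rewrite mnm0E.
rewrite Xm0 divr1; reflexivity. Qed.

Lemma Apred_Xinv i : i != i0 -> Apred (X i)^-1.
Proof.
move=> ne; exists 1, U_(i)%MM; split; first by rewrite mnm1E (negbTE ne).
rewrite rmorph1 div1r; reflexivity.
Qed.

Lemma RC_A f : RC f -> Apred f.
Proof.
case: Apred_rc => Sc Sa Sm.
apply: Rgen_ind => // x /memC [[i ->]|[i [hi ->]]]; first exact: Apred_poly.
rewrite /xprime; apply: Sm; first exact: Apred_poly.
apply: Apred_Xinv; apply: contraL hi => /eqP ->; rewrite Hi0.
by [].
Qed.

Lemma coefXi0 (p : {mpoly R[n]}) (i : 'I_n) (m : 'X_{1..n}) : m i = 0%N -> ('X_i * p)@_m = 0.
Proof.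
move=> hm; rewrite mulrC; apply/eqP; rewrite mcoeff_eq0 (perm_mem (msuppMX p U_(i))).
apply/mapP => -[m' _ e]; move: hm; rewrite e mnmDE mnm1E eqxx.
by [].
Qed.

Variable (M : 'I_n -> 'X_{1..n}).
Hypothesis HM1 : forall i, LF (F i) (M i).
Hypothesis HM2 : forall i j : 'I_n, (j <= i)%N -> M i j = 0%N.

Lemma key g : Span stdp g -> Apred (g / X i0) -> RC (g / X i0).
Proof.
move=> [s [Hs ->]] HA.
pose P0 := fun x : R * ('X_{1..n} * 'X_{1..n}) => (0 < x.2.1 i0)%N.
move: HA; rewrite (bigID P0).
set g1 := \sum_(x <- s | P0 x) _.
set g0 := \sum_(x <- s | ~~ P0 x) _.
move=> HA.
have RC1 : RC (g1 / X i0).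
  rewrite /g1 mulr_suml big_mkcond big_seq big_mkcond; apply: rc_sum; first exact: RC_rc.
  move=> x; case: ifP => xs; last by case: RC_rc => Sc _ _; have := Sc 0; rewrite rmorph0.
  case: ifP => hx; last by case: RC_rc => Sc _ _; have := Sc 0; rewrite rmorph0.
  have [hv _] := Hs x xs.
  have la : (U_(i0) <= x.2.1)%MM.
    by apply/mnm_lepP => j; rewrite mnm1E; case: eqP => [<-|] //=.
  have ea := submK la.
  have -> : t x.2.1 x.2.2 = t (x.2.1 - U_(i0))%MM x.2.2 * X i0.
    by rewrite -{1}ea -{1}(addm0 x.2.2) t_add t_U0.
  rewrite -mulrA mulfK; last exact: Xf_neq0.
  case: RC_rc => Sc _ Sm; apply: Sm; first exact: Sc.
  exact: RC_t.
have A0 : Apred (g0 / X i0).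
  have -> : g0 / X i0 = (g1 + g0) / X i0 + (- (g1 / X i0)).
    by rewrite mulrDl addrC addKr.
  case: Apred_rc => Sc Sa Sm; apply: Sa => //.
  apply: rc_opp; first exact: Apred_rc.
  exact: RC_A.
change (RC ((g1 + g0) / X i0)).
suff g00 : g0 = 0 by rewrite g00 addr0.
case: A0 => h [ga [hga e]].
set s0 := [seq x <- s | ~~ P0 x].
have g0E : g0 = \sum_(x <- s0) phi x.1 * t x.2.1 x.2.2 by rewrite big_filter.
pose beta := (\sum_(x <- s0) x.2.2)%MM.
have Hgood : forall x, x \in s0 -> good i0 beta x.
  move=> x; rewrite mem_filter => /andP[hx xs]; have [hv hst] := Hs x xs; split => //.
  - by move: hx; rewrite /P0 -leqNgt leqn0 => /eqP.
  - move=> i; rewrite /beta mnm_sumE (big_rem x) ?leq_addr //.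
    by rewrite mem_filter hx xs.
have hbeta : beta i0 = 0%N.
  rewrite /beta mnm_sumE big_seq big1 // => x /Hgood [].
  by [].
have tT : forall x, x \in s0 ->
    t x.2.1 x.2.2 * Xm beta = (Tp F beta x.2.1 x.2.2)%:F.
  move=> x xs; have [_ _ _ hb] := Hgood x xs.
  rewrite /t XmE -big_split /Tp tofracM tofracX rmorph_prod -big_split.
  apply: eq_bigr => i _; rewrite rmorphXn mnmBE mnmDE /xprime.
  exact: expr_div_id (Xf_neq0 i) (hb i).
have QE : g0 * Xm beta = (Qs F beta s0)%:F.
  rewrite g0E mulr_suml /Qs rmorph_sum big_seq [RHS]big_seq; apply: eq_bigr => x xs.
  rewrite -mulrA tT // -mul_mpolyC [RHS]tofracM; reflexivity.
have Qeq : Qs F beta s0 * 'X_[ga] = 'X_i0 * (h * 'X_[beta]).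
  apply/eqP; rewrite -tofrac_eq !tofracM -QE.
  have -> : g0 = h%:F / Xm ga * X i0 by rewrite -e divfK //; exact: Xf_neq0.
  rewrite -/(Xm ga) -/(Xm beta) -/(X i0).
  have := Xm_neq0 ga; move: (Xm ga) (Xm beta) (X i0) (h%:F) => a b c d a0.
  by apply/eqP; apply: aux4.
have Qv : forall m : 'X_{1..n}, m i0 = 0%N -> (Qs F beta s0)@_m = 0.
  move=> m hm; rewrite -(mcoeffMX _ ga m) Qeq coefXi0 //.
  by rewrite mnmDE hga hm.
have Q0 := lex_kill Hi0 HM1 HM2 hbeta Hgood Qv.
move: QE; rewrite Q0 rmorph0 => /eqP; rewrite mulf_eq0 (negbTE (Xm_neq0 _)) orbF.
by move/eqP.
Qed.

Definition Bpred (f : K) := exists (k : nat) (g : K), RC g /\ f = g / X i0 ^+ k.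

Lemma Bpred_rc : rclosed Bpred.
Proof.
case: RC_rc => Sc Sa Sm.
split.
- move=> c; exists 0%N, (phi c); split; first exact: Sc.
  by rewrite expr0 divr1.
- move=> x y [k1 [g1 [r1 ->]]] [k2 [g2 [r2 ->]]].
  exists (k1 + k2)%N, (g1 * X i0 ^+ k2 + g2 * X i0 ^+ k1); split.
    have RX : forall k, RC (X i0 ^+ k) by move=> k; apply: rc_exp; [exact: RC_rc|exact: RC_X].
    by apply: Sa; apply: Sm.
  rewrite addf_div ?expf_neq0 ?Xf_neq0 // exprD; reflexivity.
- move=> x y [k1 [g1 [r1 ->]]] [k2 [g2 [r2 ->]]].
  exists (k1 + k2)%N, (g1 * g2); split; first exact: Sm.
  by rewrite mulf_div exprD.
Qed.

Lemma RB_B f : Rgen (gensB F) f -> Bpred f.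
Proof.
case: Bpred_rc => Sc Sa Sm.
apply: Rgen_ind => // x /memB [[i ->]|[i [hi ->]]|[i [hi ->]]].
- by exists 0%N, (X i); split; [exact: RC_X|rewrite expr0 divr1].
- have -> : i = i0 by apply: val_inj; rewrite /= hi Hi0.
  exists 1%N, 1; split; last by rewrite expr1 div1r.
  by case: RC_rc => Sc' _ _; have := Sc' 1; rewrite rmorph1.
- by exists 0%N, (xp i); split; [exact: RC_xp|rewrite expr0 divr1].
Qed.

Lemma RA_A f : Rgen (gensA n R) f -> Apred f.
Proof.
case: Apred_rc => Sc Sa Sm.
apply: Rgen_ind => // x /memA [[i ->]|[i [hi ->]]]; first exact: Apred_poly.
apply: Apred_Xinv; apply: contraL hi => /eqP ->; rewrite Hi0.
by [].
Qed.

Lemma main_incl f : Rgen (gensA n R) f -> Rgen (gensB F) f -> RC f.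
Proof.
move=> /RA_A HA /RB_B [k [g [Hg e]]]; subst f.
elim: k g Hg HA => [|k IH] g Hg HA; first by rewrite expr0 divr1.
have HA' : Apred (g / X i0).
  have -> : g / X i0 = g / X i0 ^+ k.+1 * X i0 ^+ k.
    by rewrite exprS invfM mulrA mulfVK // expf_neq0 // Xf_neq0.
  case: Apred_rc => Sc Sa Sm; apply: Sm => //; apply: rc_exp; first exact: Apred_rc.
  exact: Apred_poly.
have RC1 : RC (g / X i0) by apply: key => //; apply/Span_std/RC_Span.
have -> : g / X i0 ^+ k.+1 = (g / X i0) / X i0 ^+ k by rewrite exprS invfM mulrA.
apply: IH => //.
by move: HA; rewrite exprS invfM mulrA.
Qed.
End Main.


End Aux.
Import Aux.

Theorem lemma4p20 (R : idomainType) (n : nat) (F : 'I_n -> {mpoly R[n]}) :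
  UFD R ->
  (forall k : nat, (k%:R : R) = 0 -> k = 0%N) ->
  (2 <= n)%N ->
  LPseed F ->
  Condition12 F ->
  forall f : {fraction {mpoly R[n]}},
    (Rgen (gensA n R) f /\ Rgen (gensB F) f) <-> Rgen (gensC F) f.
Proof.
move=> _ _ hn _ HC f.
have hn0 : (0 < n)%N by apply: leq_trans hn.
pose i0 : 'I_n := Ordinal hn0.
have Hi0 : val i0 = 0%N by [].
have HM : forall k : 'I_n, exists m : 'X_{1..n},
    LF (F k) m /\ (forall i : 'I_n, (i <= k)%N -> m i = 0%N).
  move=> k; case: (HC k) => _ [m [mS mL] [m1 m0]] _ _; exists m; split => //.
  split => // m' hm'; case: (eqVneq m' m) => [->|ne]; first by left.
  by right; apply: mL.
pose M := fun k => proj1_sig (constructive_indefinite_description _ (HM k)).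
have HMs : forall k, LF (F k) (M k) /\ (forall i : 'I_n, (i <= k)%N -> M k i = 0%N).
  by move=> k; rewrite /M; case: constructive_indefinite_description.
split.
  by case=> hA hB; apply: (main_incl Hi0 (M := M)) => // [i|i j]; case: (HMs i) => // _; apply.
move=> hC; split.
- apply: (Rgen_sub _ hC) => x /memC [[i ->]|[i [hi ->]]].
    exact/Rgen_mem/inA_X.
  rewrite /xprime; apply: Rgen_mul; last exact/Rgen_mem/inA_Xinv.
  by apply: rc_poly; [exact: rclosed_Rgen| move=> j; exact/Rgen_mem/inA_X].
- apply: (Rgen_sub _ hC) => x /memC [[i ->]|[i [hi ->]]].
    exact/Rgen_mem/inB_X.
  exact/Rgen_mem/inB_xp.
Qed.
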